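(* Let $A$ be an $m\times m$ coloring matrix, let $m'\ge1$, and let $A'$ be the $(m+m')\times(m+m')$ block matrix $$A'=\left[\begin{array}{c|c}A&0\\\hline \mathbf{1}&0\end{array}\right],$$ where $\mathbf{1}$ is the $m'\times m$ all-ones matrix and the $0$ blocks are zero matrices. Then $$F_{A'}(x)=F_A(x)+\frac{m'x}{1-F_A(x)}.$$
   Context: A plane tree is an unlabeled rooted tree in which the children of every vertex are linearly ordered. A coloring matrix is a square matrix $A=(a_{ij})$ with entries in $\{0,1\}$. An $A$-coloring of a plane tree assigns to each vertex a color (an index of a row of $A$) such that whenever a vertex of color $j$ is a child of a vertex of color $i$, $a_{ij}=1$. Let $t_A(n)$ be the number of pairs (plane tree with $n$ vertices, $A$-coloring of it), and $F_A(x)=\sum_{n\ge1}t_A(n)x^n$ (formal power series). *)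

(* Defs.v *)
From Stdlib Require Import ClassicalEpsilon.
From Stdlib Require List.
From mathcomp Require Import all_boot all_order all_algebra.
Set Implicit Arguments. Unset Strict Implicit. Unset Printing Implicit Defensive.
Import GRing.Theory Num.Theory.
Local Open Scope ring_scope.

(* A plane tree together with an assignment of a color in 'I_m to each vertex:
   the children of each vertex are linearly ordered (a list). *)
Inductive ctree (m : nat) : Type := CNode : 'I_m -> seq (ctree m) -> ctree m.

Definition ct_color m (t : ctree m) : 'I_m := let: CNode c _ := t in c.

Fixpoint ct_size m (t : ctree m) : nat :=
  let: CNode _ ts := t in (sumn (map (@ct_size m) ts)).+1.

Inductive ptree : Type := PNode : seq ptree -> ptree.
Fixpoint ct_shape m (t : ctree m) : ptree :=
  let: CNode _ ts := t in PNode (map (@ct_shape m) ts).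

(* the coloring is an A-coloring: a child of color j of a vertex of color i
   requires a_ij = 1 (true) *)
Fixpoint ct_valid m (A : 'M[bool]_m) (t : ctree m) : bool :=
  let: CNode c ts := t in
  all (fun s => A c (ct_color s)) ts && all (@ct_valid m A) ts.

(* cardinality of a finite set given as a predicate: the length of a
   duplicate-free list enumerating it exactly (0 if no such list exists) *)
Definition card_pred (T : Type) (P : T -> Prop) : nat :=
  epsilon (inhabits 0%N) (fun k => exists s : seq T,
    List.NoDup s /\ (forall x, List.In x s <-> P x) /\ size s = k).

(* t_A(n): number of pairs (plane tree with n vertices, A-coloring of it),
   i.e. number of A-validly colored plane trees with n vertices *)
Definition tA m (A : 'M[bool]_m) (n : nat) : nat :=
  card_pred (fun t : ctree m => ct_size t = n /\ ct_valid A t).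

Definition fps := nat -> rat.
Definition fps_add (f g : fps) : fps := fun n => f n + g n.
Definition fps_sub (f g : fps) : fps := fun n => f n - g n.
Definition fps_mul (f g : fps) : fps :=
  fun n => \sum_(i < n.+1) f i * g (n - i)%N.
Definition fps_const (c : rat) : fps := fun n => if n == 0%N then c else 0.
Definition fps_X : fps := fun n => if n == 1%N then 1 else 0.

Fixpoint fps_inv_aux (f : fps) (n : nat) : seq rat :=
  match n with
  | 0%N => [:: (f 0%N)^-1]
  | n'.+1 => let s := fps_inv_aux f n' in
      rcons s (- (f 0%N)^-1 *
               \sum_(i < n'.+1) f i.+1 * nth 0 s (n' - i)%N)
  end.
Definition fps_inv (f : fps) : fps := fun n => nth 0 (fps_inv_aux f n) n.
Definition fps_div (f g : fps) : fps := fps_mul f (fps_inv g).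

Definition FA m (A : 'M[bool]_m) : fps :=
  fun n => if n == 0%N then 0 else (tA A n)%:R.

Definition ext_mx m m' (A : 'M[bool]_m) : 'M[bool]_(m + m') :=
  block_mx A (const_mx false) (const_mx true) (const_mx false).

(* Main.v *)
Require Import Defs.
From mathcomp Require Import all_boot all_order all_algebra.
From Stdlib Require Import ClassicalEpsilon.
From Stdlib Require List.
From mathcomp Require Import all_boot all_order all_algebra.
Set Implicit Arguments. Unset Strict Implicit. Unset Printing Implicit Defensive.

Section Lists.
Variable X : Type.
Implicit Types s : seq X.

Lemma size_len s : size s = length s.
Proof. by elim: s => //= x s ->. Qed.

Lemma In_cat x s1 s2 : List.In x (s1 ++ s2) <-> List.In x s1 \/ List.In x s2.
Proof.
elim: s1 => /= [|y s1 IH]; first by split; [right|case].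
rewrite IH; tauto.
Qed.

Lemma In_map (Y : Type) (f : X -> Y) y s :
  List.In y (map f s) <-> exists x, List.In x s /\ y = f x.
Proof.
elim: s => /= [|x s IH]; first by split => //; case=> ? [] [].
rewrite IH; split.
  case=> [<-|[z [Hz ->]]]; first by exists x; split; [left|].
  by exists z; split; [right|].
case=> z [[<-|Hz] ->]; first by left.
by right; exists z.
Qed.

Lemma In_filter (b : pred X) x s : List.In x (filter b s) <-> List.In x s /\ b x.
Proof.
elim: s => /= [|y s IH]; first by split => //; case.
case: ifP => hb; rewrite /= ?IH; split.
- case=> [<-|[h1 h2]]; first by split; [left|].
  by split; [right|].
- by case=> [[<-|h1] h2]; [left|right].
- by move=> [h1 h2]; split; [right|].
- by case=> [[e|h1] h2]; [rewrite -e hb in h2|].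
Qed.

Lemma NoDup_cat s1 s2 : List.NoDup s1 -> List.NoDup s2 ->
  (forall x, List.In x s1 -> List.In x s2 -> False) -> List.NoDup (s1 ++ s2).
Proof.
elim: s1 => //= x s1 IH /List.NoDup_cons_iff [nx n1] n2 dis.
constructor.
  by rewrite In_cat => -[//|]; apply: dis; left.
by apply: IH => // y h1 h2; apply: (dis y) => //; right.
Qed.

Lemma NoDup_map (Y : Type) (f : X -> Y) s : injective f -> List.NoDup s ->
  List.NoDup (map f s).
Proof.
move=> inj; elim: s => //= [|x s IH /List.NoDup_cons_iff [nx ns]]; first by constructor.
constructor; last exact: IH.
by rewrite In_map => -[y [hy /inj e]]; apply: nx; rewrite e.
Qed.

Lemma NoDup_filter (b : pred X) s : List.NoDup s -> List.NoDup (filter b s).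
Proof.
elim: s => //= x s IH /List.NoDup_cons_iff [nx ns].
case: ifP => _; last exact: IH.
constructor; last exact: IH.
by rewrite In_filter => -[].
Qed.

Definition enum_of (P : X -> Prop) s := List.NoDup s /\ forall x, List.In x s <-> P x.

Lemma card_pred_eq P s : enum_of P s -> card_pred P = size s.
Proof.
move=> [nd hs]; rewrite /card_pred.
set Q := fun k => _.
have: Q (size s) by exists s.
move=> /(ex_intro Q) /(epsilon_spec (inhabits 0%N)).
move=> [s' [nd' [hs' <-]]].
apply/eqP; rewrite eqn_leq !size_len; apply/andP; split; apply/leP;
  apply: List.NoDup_incl_length => // x.
- by move=> h; first [by apply/hs; apply/hs' | by apply/hs'; apply/hs].
- by move=> h; first [by apply/hs; apply/hs' | by apply/hs'; apply/hs].
Qed.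

Definition pick_enum (P : X -> Prop) : seq X := epsilon (inhabits [::]) (enum_of P).

Lemma pick_enumP P : (exists s, enum_of P s) -> enum_of P (pick_enum P).
Proof. exact: epsilon_spec. Qed.

Lemma enum_filter P (b : pred X) s : enum_of P s ->
  enum_of (fun x => P x /\ b x) (filter b s).
Proof.
move=> [nd hs]; split; first exact: NoDup_filter.
by move=> x; rewrite In_filter hs.
Qed.

Lemma enum_cat P Q s1 s2 : enum_of P s1 -> enum_of Q s2 ->
  (forall x, P x -> Q x -> False) -> enum_of (fun x => P x \/ Q x) (s1 ++ s2).
Proof.
move=> [n1 h1] [n2 h2] dis; split.
  by apply: NoDup_cat => // x /h1 ? /h2; apply: dis.
by move=> x; rewrite In_cat h1 h2.
Qed.

End Lists.

Lemma enum_map (X Y : Type) (f : X -> Y) P s : injective f -> enum_of P s ->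
  enum_of (fun y => exists x, P x /\ y = f x) (map f s).
Proof.
move=> inj [nd hs]; split; first exact: NoDup_map.
move=> y; rewrite In_map; split=> -[x [h ->]]; exists x; split => //; exact/hs.
Qed.



Lemma In_allpairs (X Y Z : Type) (f : X -> Y -> Z) s1 s2 z :
  List.In z [seq f x y | x <- s1, y <- s2] <->
  exists x y, List.In x s1 /\ List.In y s2 /\ z = f x y.
Proof.
elim: s1 => /= [|x s1 IH]; first by split => //; case=> ? [? [[]]].
rewrite In_cat In_map IH; split.
  case=> [[y [hy ->]] | [x' [y [h1 [h2 ->]]]]].
    by exists x, y; split; [left|].
  by exists x', y; split; [right|].
case=> x' [y [[<-|h1] [h2 ->]]]; first by left; exists y.
by right; exists x', y.
Qed.

Lemma enum_pairs (X Y Z : Type) (f : X -> Y -> Z) P Q s1 s2 :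
  (forall x y x' y', f x y = f x' y' -> x = x' /\ y = y') ->
  enum_of P s1 -> enum_of Q s2 ->
  enum_of (fun z => exists x y, P x /\ Q y /\ z = f x y) [seq f x y | x <- s1, y <- s2].
Proof.
move=> inj [n1 h1] [n2 h2]; split.
  elim: s1 n1 {h1} => /= [|x s1 IH /List.NoDup_cons_iff [nx ns]]; first by constructor.
  apply: NoDup_cat; first by apply: NoDup_map => // y y' /inj[].
    exact: IH.
  move=> z /In_map [y [_ ->]] /In_allpairs [x' [y' [hx' [_ /inj [e _]]]]].
  by apply: nx; rewrite e.
move=> z; rewrite In_allpairs; split.
  by case=> x [y [hx [hy ->]]]; exists x, y; split; [apply/h1|split; [apply/h2|]].
by case=> x [y [hx [hy ->]]]; exists x, y; split; [apply/h1|split; [apply/h2|]].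
Qed.

Lemma enum_flatten (X : Type) (P : nat -> X -> Prop) (sf : nat -> seq X) (idx : seq nat) :
  List.NoDup idx ->
  (forall k, List.In k idx -> enum_of (P k) (sf k)) ->
  (forall k k' x, P k x -> P k' x -> k = k') ->
  enum_of (fun x => exists k, List.In k idx /\ P k x) (flatten [seq sf k | k <- idx]).
Proof.
move=> nd hs dis; elim: idx nd hs => /= [|k idx IH /List.NoDup_cons_iff [nk ni]] hs.
  by split; [constructor|move=> x; split => //; case=> ? [[]]].
have [IHn IHi] := IH ni (fun k' h => hs k' (or_intror h)).
have [nd0 h0] := hs k (or_introl erefl).
split.
  apply: NoDup_cat => // x /h0 hx /IHi [k' [hk' hx']].
  by apply: nk; rewrite (dis _ _ _ hx hx').
move=> x; rewrite In_cat h0 IHi; split.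
  by case=> [hx|[k' [hk' hx]]]; [exists k; split; [left|]|exists k'; split; [right|]].
case=> k' [[<-|hk'] hx]; first by left.
by right; exists k'.
Qed.

Lemma In_mem (T : eqType) (x : T) s : List.In x s <-> x \in s.
Proof.
elim: s => //= y s IH; rewrite in_cons IH; split.
  by case=> [->|->]; rewrite ?eqxx ?orbT.
by case/orP=> [/eqP->|]; [left|right].
Qed.

Lemma NoDup_uniq (T : eqType) (s : seq T) : uniq s -> List.NoDup s.
Proof.
elim: s => /= [|x s IH /andP [nx us]]; constructor; last exact: IH.
by move/In_mem; rewrite (negbTE nx).
Qed.

Lemma enum_ext (X : Type) (P Q : X -> Prop) s : (forall x, P x <-> Q x) ->
  enum_of P s -> enum_of Q s.
Proof. by move=> e [nd h]; split => // x; rewrite h e. Qed.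

Lemma enum_ord n : enum_of (fun _ : 'I_n => True) (enum 'I_n).
Proof.
split; first exact/NoDup_uniq/enum_uniq.
by move=> x; rewrite In_mem mem_enum.
Qed.

Section Trees.
Variables (m : nat) (A : 'M[bool]_m).

Definition Tset n (t : ctree m) := ct_size t = n /\ ct_valid A t.
Definition Fset n (ts : seq (ctree m)) :=
  sumn (map (@ct_size m) ts) = n /\ all (ct_valid A) ts.

Lemma ct_size_pos (t : ctree m) : (0 < ct_size t)%N.
Proof. by case: t. Qed.

Lemma Fset0 : enum_of (Fset 0) [:: [::]].
Proof.
split; first by constructor; [case|constructor].
move=> ts; split; first by case=> // <-; split.
case: ts => [_|t ts [] /=]; first by left.
by have := ct_size_pos t; case: (ct_size t).
Qed.

Definition fstep n (st : nat -> seq (ctree m)) (sf : nat -> seq (seq (ctree m))) :=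
  flatten [seq [seq (t :: f) | t <- st k, f <- sf k] | k <- iota 0 n.+1].

Lemma Fset_step n st sf :
  (forall k, (k < n.+1)%N -> enum_of (Tset k.+1) (st k)) ->
  (forall k, (k < n.+1)%N -> enum_of (Fset (n - k)) (sf k)) ->
  enum_of (Fset n.+1) (fstep n st sf).
Proof.
move=> hst hsf.
have := @enum_flatten _
  (fun k z => exists t f, Tset k.+1 t /\ Fset (n - k) f /\ z = t :: f)
  (fun k => [seq (t :: f) | t <- st k, f <- sf k]) (iota 0 n.+1)
  (NoDup_uniq (iota_uniq 0 n.+1)).
case.
- move=> k /In_mem; rewrite mem_iota add0n => /andP [_ hk].
  by apply: enum_pairs; [move=> ? ? ? ? [-> ->]|apply: hst|apply: hsf].
- move=> k k' z [t [f [[ht _] [_ ->]]]] [t' [f' [[ht' _] [_ [et _]]]]].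
  by move: ht'; rewrite -et ht => -[].
move=> nd hin; split => // z; rewrite hin; split.
  case=> k [/In_mem]; rewrite mem_iota add0n => /andP [_ hk].
  case=> t [f [[ht vt] [[hf vf] ->]]].
  split; last by rewrite /= vt vf.
  by rewrite /= ht hf addSn subnKC.
case: z => [[]//|t f [/= hs /andP [vt vf]]].
have hp := ct_size_pos t.
have hk : List.In (ct_size t).-1 (iota 0 n.+1).
  apply/In_mem; rewrite mem_iota add0n /=.
  by rewrite -hs; move: hp; case: (ct_size t) => //= k _; rewrite ltnS leq_addr.
exists (ct_size t).-1; split; first exact: hk.
exists t, f; split; first by rewrite prednK.
split => //; split => //.
by move: hs; rewrite -(prednK hp) addSn => -[<-]; rewrite addKn.
Qed.

Lemma size_fstep n st sf :
  size (fstep n st sf) = sumn [seq size (st k) * size (sf k) | k <- iota 0 n.+1].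
Proof.
rewrite /fstep size_flatten /shape -map_comp.
by congr sumn; apply: eq_map => k /=; rewrite size_allpairs.
Qed.

Definition tstep (sf : seq (seq (ctree m))) :=
  filter (ct_valid A) [seq CNode c f | c <- enum 'I_m, f <- sf].

Lemma Tset_step n sf : enum_of (Fset n) sf -> enum_of (Tset n.+1) (tstep sf).
Proof.
move=> hf.
have inj : forall (x : 'I_m) y x' y', CNode x y = CNode x' y' -> x = x' /\ y = y'.
  by move=> ? ? ? ? [-> ->].
have [nd hin] := enum_filter (ct_valid A) (enum_pairs inj (enum_ord m) hf).
 split => // z; rewrite hin; split.
  case=> [[c [f [_ [[hs vf] ->]]]] v]; split => //=.
  by rewrite hs.
case: z => c f [/= [hs]] /andP [va vf].
split; last by rewrite /= va vf.
by exists c, f; split => //; split => //; split => //; rewrite vf.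
Qed.

Definition T_l n := pick_enum (Tset n).
Definition F_l n := pick_enum (Fset n).

Lemma enum_exists N : forall n, (n <= N)%N ->
  enum_of (Tset n) (T_l n) /\ enum_of (Fset n) (F_l n).
Proof.
elim: N => [|N IH] n hn.
  move: hn; rewrite leqn0 => /eqP ->.
  split; apply: pick_enumP.
    exists [::]; split; first by constructor.
    by move=> t; split => // -[]; have := ct_size_pos t; case: (ct_size t).
  by exists [:: [::]]; exact: Fset0.
case: (leqP n N) => [/IH //|hnN].
have -> : n = N.+1 by apply/eqP; rewrite eqn_leq hn.
have hT : enum_of (Tset N.+1) (T_l N.+1).
  apply: pick_enumP; exists (tstep (F_l N)).
  by apply: Tset_step; case: (IH N (leqnn N)).
split => //; apply: pick_enumP.
exists (fstep N (fun k => T_l k.+1) (fun k => F_l (N - k))).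
apply: Fset_step => k hk.
  move: hk; rewrite ltnS leq_eqVlt => /orP [/eqP -> //|hk].
  by case: (IH k.+1 hk).
by case: (IH (N - k) (leq_subr _ _)).
Qed.

Lemma T_lP n : enum_of (Tset n) (T_l n).
Proof. by case: (enum_exists (leqnn n)). Qed.
Lemma F_lP n : enum_of (Fset n) (F_l n).
Proof. by case: (enum_exists (leqnn n)). Qed.

Definition fcount n := card_pred (Fset n).

Lemma tA_size n : tA A n = size (T_l n).
Proof. exact: (card_pred_eq (T_lP n)). Qed.

Lemma fcount_size n : fcount n = size (F_l n).
Proof. exact: (card_pred_eq (F_lP n)). Qed.

Lemma fcount0 : fcount 0 = 1%N.
Proof. exact: (card_pred_eq Fset0). Qed.

Lemma fcountS n :
  fcount n.+1 = sumn [seq tA A k.+1 * fcount (n - k) | k <- iota 0 n.+1].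
Proof.
rewrite /fcount (card_pred_eq (Fset_step (st := fun k => T_l k.+1)
   (sf := fun k => F_l (n - k)) (fun k _ => T_lP _) (fun k _ => F_lP _))).
rewrite size_fstep; congr sumn; apply: eq_map => k.
by rewrite tA_size -fcount_size.
Qed.

End Trees.

Fixpoint ctree_ind' m (P : ctree m -> Prop)
  (H : forall c ts, (forall t, List.In t ts -> P t) -> P (CNode c ts)) t : P t :=
  let: CNode c ts := t in
  H c ts ((fix aux (l : seq (ctree m)) : forall t, List.In t l -> P t :=
    match l with
    | [::] => fun t (F : List.In t [::]) => match F with end
    | x :: l' => fun t Hin => match Hin with
                 | or_introl e => eq_ind x P (ctree_ind' H x) t e
                 | or_intror h => aux l' t h end
    end) ts).

Lemma map_In_eq (X Y : Type) (f g : X -> Y) s :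
  (forall x, List.In x s -> f x = g x) -> map f s = map g s.
Proof.
elim: s => //= x s IH h; rewrite h; last by left.
by rewrite IH // => y hy; apply: h; right.
Qed.

Lemma all_In_eq (X : Type) (p q : pred X) s :
  (forall x, List.In x s -> p x = q x) -> all p s = all q s.
Proof.
elim: s => //= x s IH h; rewrite h; last by left.
by rewrite IH // => y hy; apply: h; right.
Qed.

Lemma map_inj_In (X Y : Type) (f : X -> Y) s s' :
  (forall x, List.In x s -> forall y, f x = f y -> x = y) ->
  map f s = map f s' -> s = s'.
Proof.
elim: s s' => [|x s IH] [|y s'] //= h [e1 e2].
rewrite (h x (or_introl erefl) y e1); congr cons.
by apply: IH => // z hz; apply: h; right.
Qed.

Lemma all_In (X : Type) (p : pred X) s : all p s -> forall x, List.In x s -> p x.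
Proof.
elim: s => //= y s IH /andP [hy hs] x [<-//|hx]; exact: IH.
Qed.

Lemma In_all (X : Type) (p : pred X) s : (forall x, List.In x s -> p x) -> all p s.
Proof.
elim: s => //= y s IH h; rewrite h; last by left.
by rewrite IH // => x hx; apply: h; right.
Qed.

Lemma lrshift_neq m n (i : 'I_m) (j : 'I_n) : lshift n i <> rshift m j.
Proof.
move/(congr1 val) => /= e; have := ltn_ord i.
by rewrite e -{2}(addn0 m) ltn_add2l.
Qed.

Section Ext.
Variables (m m' : nat) (A : 'M[bool]_m).
Let B := ext_mx m' A.

Lemma B_ll i j : B (lshift m' i) (lshift m' j) = A i j.
Proof. by rewrite /B /ext_mx block_mxEul. Qed.
Lemma B_lr i j : B (lshift m' i) (rshift m j) = false.
Proof. by rewrite /B /ext_mx block_mxEur mxE. Qed.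
Lemma B_rl i j : B (rshift m i) (lshift m' j) = true.
Proof. by rewrite /B /ext_mx block_mxEdl mxE. Qed.
Lemma B_rr i j : B (rshift m i) (rshift m j) = false.
Proof. by rewrite /B /ext_mx block_mxEdr mxE. Qed.

Fixpoint emb (t : ctree m) : ctree (m + m') :=
  let: CNode c ts := t in CNode (lshift m' c) (map emb ts).

Lemma emb_size t : ct_size (emb t) = ct_size t.
Proof.
elim/ctree_ind': t => c ts IH /=; congr S.
by rewrite -map_comp; congr sumn; apply: map_In_eq.
Qed.

Lemma emb_color t : ct_color (emb t) = lshift m' (ct_color t).
Proof. by case: t. Qed.

Lemma emb_valid t : ct_valid B (emb t) = ct_valid A t.
Proof.
elim/ctree_ind': t => c ts IH /=.
rewrite !all_map; congr andb.
  by apply: all_In_eq => x _ /=; rewrite emb_color B_ll.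
by apply: all_In_eq => x hx /=; rewrite IH.
Qed.

Lemma emb_inj : injective emb.
Proof.
move=> t; elim/ctree_ind': t => c ts IH [d us] /= [ec e].
have -> : c = d by apply/val_inj.
by congr CNode; apply: map_inj_In e.
Qed.

Lemma emb_list (s : seq (ctree (m + m'))) :
  (forall x, List.In x s -> exists u, x = emb u /\ ct_valid A u) ->
  exists us, s = map emb us /\ all (ct_valid A) us.
Proof.
elim: s => [|x s IH] h; first by exists [::].
have [u [-> vu]] := h x (or_introl erefl).
have [us [-> vus]] := IH (fun y hy => h y (or_intror hy)).
by exists (u :: us); rewrite /= vu vus.
Qed.

Lemma children_old i (ts : seq (ctree (m + m'))) :
  all (fun s => B (lshift m' i) (ct_color s)) ts ->
  forall x, List.In x ts -> exists j, ct_color x = lshift m' j.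
Proof.
move=> /all_In h x /h.
case: (split_ordP (ct_color x)) => [j ->|j ->]; first by exists j.
by rewrite B_lr.
Qed.

Lemma children_old' i (ts : seq (ctree (m + m'))) :
  all (fun s => B (rshift m i) (ct_color s)) ts ->
  forall x, List.In x ts -> exists j, ct_color x = lshift m' j.
Proof.
move=> /all_In h x /h.
case: (split_ordP (ct_color x)) => [j ->|j ->]; first by exists j.
by rewrite B_rr.
Qed.

Lemma emb_surj t : ct_valid B t -> forall i, ct_color t = lshift m' i ->
  exists u, t = emb u /\ ct_valid A u.
Proof.
elim/ctree_ind': t => c ts IH /= /andP [hc hv] i ec.
rewrite ec in hc.
have [us [ets vus]] : exists us, ts = map emb us /\ all (ct_valid A) us.
  apply: emb_list => x hx.
  have [j ej] := children_old hc hx.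
  apply: (IH x hx _ j ej).
  exact: (all_In hv).
exists (CNode i us); rewrite ec ets; split => //=.
rewrite vus andbT.
move: hc; rewrite ets all_map; apply: sub_all => u /=.
by rewrite emb_color B_ll.
Qed.

Definition newT n :=
  [seq CNode (rshift m j) (map emb f) | j <- enum 'I_m', f <- F_l A n].

Definition TB_l n := map emb (T_l A n.+1) ++ newT n.

Lemma TB_lP n : enum_of (Tset B n.+1) (TB_l n).
Proof.
have inj : forall (x : 'I_m') y x' y',
    CNode (rshift m x) (map emb y) = CNode (rshift m x') (map emb y') ->
    x = x' /\ y = y'.
  move=> x y x' y' [/addnI ex /(inj_map emb_inj) ->]; split => //.
  exact/val_inj.
have := enum_cat (enum_map emb_inj (T_lP A n.+1))
  (enum_pairs inj (enum_ord m') (F_lP A n)).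
case.
  move=> z [u [_ ->]] [j [f [_ [_ /(congr1 (@ct_color _))]]]].
  by rewrite emb_color /=; apply: lrshift_neq.
move=> nd hin; split => // z; rewrite hin; split.
  case=> [[u [[hs hv] ->]]|[j [f [_ [[hs hv] ->]]]]].
    by rewrite /Tset emb_size emb_valid.
  split.
    by rewrite /= -hs -map_comp; congr (sumn _).+1; apply: eq_map => x /=; rewrite emb_size.
  rewrite /= !all_map; apply/andP; split.
    by apply/In_all => x _ /=; rewrite emb_color B_rl.
  by move: hv; apply: sub_all => x /=; rewrite emb_valid.
case=> hs hv.
case: z hs hv => c ts hs hv.
case: (split_ordP c) => [i ec|j ec].
  left; have [u [eu vu]] := emb_surj hv ec.
  exists u; split => //; split => //.
  by rewrite -emb_size -eu.
right; move: hv; rewrite ec /= => /andP [hc hv].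
have [us [ets vus]] : exists us, ts = map emb us /\ all (ct_valid A) us.
  apply: emb_list => x hx.
  have [i ei] := children_old' hc hx.
  apply: (emb_surj _ ei).
  exact: (all_In hv).
exists j, us; split => //; split; last by rewrite ets.
split => //.
move: hs; rewrite /= ets -map_comp => -[<-].
by congr sumn; apply: eq_map => x /=; rewrite emb_size.
Qed.

Lemma tB_count n : tA B n.+1 = (tA A n.+1 + m' * fcount A n)%N.
Proof.
rewrite /tA (card_pred_eq (TB_lP n)) /TB_l size_cat size_map -tA_size.
by rewrite /newT size_allpairs size_enum_ord fcount_size.
Qed.

End Ext.

From Stdlib Require Import FunctionalExtensionality.
Import GRing.Theory.
Local Open Scope ring_scope.

Lemma size_aux f n : size (fps_inv_aux f n) = n.+1.
Proof. by elim: n => //= n IH; rewrite size_rcons IH. Qed.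

Lemma aux_nth f n i : (i <= n)%N -> nth 0 (fps_inv_aux f n) i = fps_inv f i.
Proof.
elim: n => [|n IH]; first by rewrite leqn0 => /eqP ->.
rewrite leq_eqVlt => /orP [/eqP -> //|hi].
by rewrite /= nth_rcons size_aux hi IH.
Qed.

Lemma fps_invS f n : fps_inv f n.+1 =
  - (f 0%N)^-1 * \sum_(i < n.+1) f i.+1 * fps_inv f (n - i)%N.
Proof.
rewrite {1}/fps_inv /= nth_rcons size_aux ltnn eqxx.
congr (_ * _); apply: eq_bigr => i _; by rewrite aux_nth // leq_subr.
Qed.

Lemma g_eq m (A : 'M[bool]_m) n :
  fps_inv (fps_sub (fps_const 1) (FA A)) n = (fcount A n)%:R.
Proof.
have f0 : fps_sub (fps_const 1) (FA A) 0%N = 1 by rewrite /fps_sub /fps_const /FA /= subr0.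
elim: n {-2}n (leqnn n) => [|N IH] n hn.
  move: hn; rewrite leqn0 => /eqP ->.
  by rewrite /fps_inv /= f0 invr1 fcount0.
case: (leqP n N) => [/IH //|hnN].
have -> : n = N.+1 by apply/eqP; rewrite eqn_leq hn.
rewrite fps_invS f0 invr1 mulN1r -sumrN fcountS.
have -> : forall F, sumn [seq F k | k <- iota 0 N.+1] = (\sum_(k < N.+1) F k)%N.
  by move=> F; rewrite sumnE big_map -[iota 0 N.+1]/(index_iota 0 N.+1) big_mkord.
rewrite natr_sum; apply: eq_bigr => i _.
rewrite IH ?leq_subr // natrM /fps_sub /fps_const /FA /=.
by rewrite sub0r mulNr opprK.
Qed.

Lemma cX (c : rat) i :
  fps_mul (fps_const c) fps_X i = if i == 1%N then c else 0.
Proof.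
rewrite /fps_mul big_ord_recl big1 ?addr0.
  rewrite /fps_const /fps_X /= subn0.
  by case: (i == 1%N); rewrite ?mulr1 ?mulr0.
by move=> j _; rewrite /fps_const /= mul0r.
Qed.

Theorem theorem25 (m m' : nat) (A : 'M[bool]_m) (hm' : (0 < m')%N) :
  FA (ext_mx m' A) =
  fps_add (FA A)
    (fps_div (fps_mul (fps_const m'%:R) fps_X)
             (fps_sub (fps_const 1) (FA A))).
Proof.
apply: functional_extensionality => n.
rewrite /fps_add /fps_div [fps_mul _ (fps_inv _) _]/fps_mul.
under eq_bigr => i _ do rewrite cX g_eq.
case: n => [|n].
  by rewrite big_ord1 /FA /= !add0r mul0r.
rewrite big_ord_recl /= mul0r add0r big_ord_recl /= ?subn0 big1 ?addr0.
  rewrite /FA /= tB_count natrD natrM.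
  by rewrite /bump /= add1n subSS subn0.
by move=> i _; rewrite mul0r.
Qed.
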